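(* Let $\mathcal L$ be either FO or MSO, let $k\ge 0$, let $\sigma,\sigma'$ be disjoint vocabularies, $\mathfrak C$ a class of finite $\sigma'$-structures and $\mathcal D$ a class of finite $\sigma$-structures. Let $\mathcal A\in\mathcal D$ and $\mathcal B\in\mathfrak C$ with $\mathrm{dom}(\mathcal A)=\mathrm{dom}(\mathcal B)$, and let $\psi_{(\mathcal A,\mathcal B)}$ be the disjunction of the sentences $\mathrm{tp}^k_{\mathcal L}(\mathcal A',\mathcal B')$ over all $\mathcal A'\in\mathcal D$, $\mathcal B'\in\mathfrak C$ with $\mathrm{dom}(\mathcal A')=\mathrm{dom}(\mathcal B')$ such that $(\mathcal A',\mathcal B')$ is a $k$-flip of $(\mathcal A,\mathcal B)$ under $(\mathcal L,\mathcal D,\mathfrak C)$. Then: (1) for every $\mathcal A'\in\mathcal D$ and $\mathcal B'\in\mathfrak C$ with $\mathrm{dom}(\mathcal A')=\mathrm{dom}(\mathcal B')$, $(\mathcal A',\mathcal B')\models\psi_{(\mathcal A,\mathcal B)}$ if and only if $(\mathcal A',\mathcal B')$ is a $k$-flip of $(\mathcal A,\mathcal B)$ under $(\mathcal L,\mathcal D,\mathfrak C)$; (2) $\psi_{(\mathcal A,\mathcal B)}$ is an $\mathcal L$-sentence of quantifier rank at most $k$ that is $\mathfrak C$-invariant over $\mathcal D$; (3) for every $\mathcal A'\in\mathcal D$, $\mathrm{tp}^k_{\mathrm{inv}(\mathcal L+\{\mathfrak C\})^{\mathcal D}}(\mathcal A)=\mathrm{tp}^k_{\mathrm{inv}(\mathcal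 L+\{\mathfrak C\})^{\mathcal D}}(\mathcal A')$ if and only if $\mathcal A'\in Q_{\psi_{(\mathcal A,\mathcal B)}}$.
   Context: All structures are finite; vocabularies consist of relation and constant symbols. For a $\sigma$-structure $\mathcal A$ and a $\sigma'$-structure $\mathcal B$ with the same domain, $(\mathcal A,\mathcal B)$ denotes the $(\sigma\cup\sigma')$-structure on that domain interpreting $\sigma$ as in $\mathcal A$ and $\sigma'$ as in $\mathcal B$. $\mathrm{tp}^k_{\mathcal L}(\mathcal M)$ is the set of $\mathcal L$-sentences of quantifier rank at most $k$ true in $\mathcal M$; up to logical equivalence it is finite and is identified with the single sentence given by the conjunction of its members (so there are finitely many such types and the disjunction above is finite up to equivalence). An $\mathcal L$-sentence $\varphi$ over $\sigma\cup\sigma'$ is $\mathfrak C$-invariant over $\mathcal D$ if for every $\mathcal A\in\mathcal D$ and all $\mathcal B_1,\mathcal B_2\in\mathfrak C$ with domain $\mathrm{dom}(\mathcal A)$, $(\mathcal A,\mathcal B_1)\models\varphi$ iff $(\mathcal A,\mathcal B_2)\models\varphi$; such $\varphi$ defines $Q_\varphi=\{\mathcal A\in\mathcal D : (\mathcal A,\mathcal B)\models\varphi$ for some (equivalently all) $\mathcal B\in\mathfrak C$ with $\mathrm{dom}(\mathcal B)=\mathrm{dom}(\mathcal A)\}$. The type $\mathrm{tp}^k_{\mathrm{inv}(\mathcal L+\{\mathfrak C\})^{\mathcal D}}(\mathcal A)$ is the set of all $\mathfrak C$-invariant over $\mathcal D$ $\mathcal L$-sentences $\varphi$ of quantifier rank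 at most $k$ with $\mathcal A\in Q_\varphi$. For pairs $(\mathcal A,\mathcal B),(\mathcal A',\mathcal B')$ with $\mathcal A,\mathcal A'\in\mathcal D$, $\mathcal B,\mathcal B'\in\mathfrak C$ and shared domains, $(\mathcal A,\mathcal B)\sim_k(\mathcal A',\mathcal B')$ means $\mathcal A=\mathcal A'$ or $\mathrm{tp}^k_{\mathcal L}(\mathcal A,\mathcal B)=\mathrm{tp}^k_{\mathcal L}(\mathcal A',\mathcal B')$; a $k$-flip of $(\mathcal A,\mathcal B)$ under $(\mathcal L,\mathcal D,\mathfrak C)$ is any pair reachable from $(\mathcal A,\mathcal B)$ by a finite sequence of $\sim_k$ steps. *)

(* Defs.v *)
From mathcomp Require Import all_boot.

Set Implicit Arguments.
Unset Strict Implicit.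
Unset Printing Implicit Defensive.

Record vocab := Vocab {
  rsym : finType;
  arity : rsym -> nat;
  csym : finType }.

Record interp (V : vocab) (T : finType) := Interp {
  rel_of : forall r : rsym V, (arity r).-tuple T -> bool;
  const_of : csym V -> T }.

Arguments rel_of {V T} i r _.
Arguments const_of {V T} i c.

Definition sum_arity (V W : vocab) (r : (rsym V + rsym W)%type) : nat :=
  match r with inl r => arity r | inr r => arity r end.

Definition vsum (V W : vocab) : vocab :=
  @Vocab (rsym V + rsym W)%type (@sum_arity V W) (csym V + csym W)%type.

Definition pairI (V W : vocab) (T : finType) (A : interp V T) (B : interp W T)
  : interp (vsum V W) T :=
  @Interp (vsum V W) T
    (fun r => match r as r0 return (sum_arity r0).-tuple T -> bool with
              | inl r => rel_of A r | inr r => rel_of B r end)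
    (fun c => match c with inl c => const_of A c | inr c => const_of B c end).

Inductive term (V : vocab) :=
| tvar of nat
| tconst of csym V.

Inductive formula (V : vocab) :=
| Ffalse
| Feq of term V & term V
| Frel (r : rsym V) of (arity r).-tuple (term V)
| Fmem of nat & term V
| Fneg of formula V
| Fand of formula V & formula V
| For of formula V & formula V
| Fex of nat & formula V
| Fall of nat & formula V
| FexS of nat & formula V
| FallS of nat & formula V.

Arguments Ffalse {V}.

Fixpoint qr (V : vocab) (f : formula V) : nat :=
  match f with
  | Ffalse | Feq _ _ | Frel _ _ | Fmem _ _ => 0
  | Fneg g => qr g
  | Fand g h | For g h => maxn (qr g) (qr h)
  | Fex _ g | Fall _ g | FexS _ g | FallS _ g => (qr g).+1
  end.

Definition tvars (V : vocab) (t : term V) : seq nat :=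
  match t with tvar i => [:: i] | tconst _ => [::] end.

Fixpoint fv (V : vocab) (f : formula V) : seq nat :=
  match f with
  | Ffalse => [::]
  | Feq t u => tvars t ++ tvars u
  | Frel _ ts => flatten (map (@tvars V) ts)
  | Fmem _ t => tvars t
  | Fneg g => fv g
  | Fand g h | For g h => fv g ++ fv h
  | Fex i g | Fall i g => filter (fun j => j != i) (fv g)
  | FexS _ g | FallS _ g => fv g
  end.

Fixpoint fsv (V : vocab) (f : formula V) : seq nat :=
  match f with
  | Ffalse | Feq _ _ | Frel _ _ => [::]
  | Fmem i _ => [:: i]
  | Fneg g => fsv g
  | Fand g h | For g h => fsv g ++ fsv h
  | Fex _ g | Fall _ g => fsv g
  | FexS i g | FallS i g => filter (fun j => j != i) (fsv g)
  end.

Definition is_sentence (V : vocab) (f : formula V) : Prop :=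
  fv f = [::] /\ fsv f = [::].

Inductive logic := FO | MSO.

Fixpoint is_FO (V : vocab) (f : formula V) : bool :=
  match f with
  | Ffalse | Feq _ _ | Frel _ _ => true
  | Fmem _ _ => false
  | Fneg g => is_FO g
  | Fand g h | For g h => is_FO g && is_FO h
  | Fex _ g | Fall _ g => is_FO g
  | FexS _ _ | FallS _ _ => false
  end.

Definition in_logic (L : logic) (V : vocab) (f : formula V) : bool :=
  match L with FO => is_FO f | MSO => true end.

Definition L_sentence (L : logic) (V : vocab) (f : formula V) : Prop :=
  in_logic L f /\ is_sentence f.

(* partial assignment of first-order variables (so that empty domains are
   handled correctly); total assignment of set variables *)
Definition tval (V : vocab) (T : finType) (M : interp V T)
  (e : nat -> option T) (t : term V) : option T :=
  match t with tvar i => e i | tconst c => Some (const_of M c) end.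

Fixpoint sat (V : vocab) (T : finType) (M : interp V T)
  (e : nat -> option T) (s : nat -> {set T}) (f : formula V) : Prop :=
  match f with
  | Ffalse => False
  | Feq t u => exists x, tval M e t = Some x /\ tval M e u = Some x
  | Frel r ts => exists xs : (arity r).-tuple T,
       (forall i, tval M e (tnth ts i) = Some (tnth xs i)) /\ rel_of M r xs
  | Fmem i t => exists x, tval M e t = Some x /\ x \in s i
  | Fneg g => ~ sat M e s g
  | Fand g h => sat M e s g /\ sat M e s h
  | For g h => sat M e s g \/ sat M e s h
  | Fex i g => exists x : T,
       sat M (fun j => if j == i then Some x else e j) s g
  | Fall i g => forall x : T,
       sat M (fun j => if j == i then Some x else e j) s g
  | FexS i g => exists X : {set T},
       sat M e (fun j => if j == i then X else s j) g
  | FallS i g => forall X : {set T},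
       sat M e (fun j => if j == i then X else s j) g
  end.

Definition holds (V : vocab) (T : finType) (M : interp V T) (f : formula V)
  : Prop := sat M (fun _ => None) (fun _ => set0) f.

Definition in_tp (L : logic) (k : nat) (V : vocab) (T : finType)
  (M : interp V T) (f : formula V) : Prop :=
  L_sentence L f /\ qr f <= k /\ holds M f.

Definition same_tp (L : logic) (k : nat) (V : vocab) (T T' : finType)
  (M : interp V T) (M' : interp V T') : Prop :=
  forall f, in_tp L k M f <-> in_tp L k M' f.

(* N satisfies the sentence tp^k_L(M) (the conjunction of its members) *)
Definition sat_tp (L : logic) (k : nat) (V : vocab) (T T' : finType)
  (M : interp V T) (N : interp V T') : Prop :=
  forall f, in_tp L k M f -> holds N f.

Definition sclass (V : vocab) := forall T : finType, interp V T -> Prop.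

Section Inv.
Variables (s s' : vocab) (D : sclass s) (C : sclass s').

Definition C_invariant (f : formula (vsum s s')) : Prop :=
  forall (T : finType) (A : interp s T), D A ->
  forall B1 B2 : interp s' T, C B1 -> C B2 ->
    (holds (pairI A B1) f <-> holds (pairI A B2) f).

Definition inQ (f : formula (vsum s s')) (T : finType) (A : interp s T)
  : Prop := D A /\ exists B : interp s' T, C B /\ holds (pairI A B) f.

Definition in_tpinv (L : logic) (k : nat) (T : finType) (A : interp s T)
  (f : formula (vsum s s')) : Prop :=
  L_sentence L f /\ qr f <= k /\ C_invariant f /\ inQ f A.

Definition same_tpinv (L : logic) (k : nat) (T T' : finType)
  (A : interp s T) (A' : interp s T') : Prop :=
  forall f, in_tpinv L k A f <-> in_tpinv L k A' f.

Record spair := SPair { pdom : finType; pfst : interp s pdom;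
                        psnd : interp s' pdom }.

Definition ksim (L : logic) (k : nat) (p q : spair) : Prop :=
  D (pfst p) /\ C (psnd p) /\ D (pfst q) /\ C (psnd q) /\
  (existT (fun T : finType => interp s T) (pdom p) (pfst p) =
   existT (fun T : finType => interp s T) (pdom q) (pfst q)
   \/ same_tp L k (pairI (pfst p) (psnd p)) (pairI (pfst q) (psnd q))).

Inductive kflip_of (L : logic) (k : nat) (p : spair) : spair -> Prop :=
| kflip_refl : kflip_of L k p p
| kflip_step q r : kflip_of L k p q -> ksim L k q r -> kflip_of L k p r.

Definition kflip (L : logic) (k : nat) (T : finType) (A : interp s T)
  (B : interp s' T) (T' : finType) (A' : interp s T') (B' : interp s' T')
  : Prop := kflip_of L k (SPair A B) (SPair A' B').

(* psi is (up to logical equivalence) the disjunction of the sentences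
   tp^k_L(A',B') over all k-flips (A',B') of (A,B) with A' \in D, B' \in C:
   an L-sentence of quantifier rank <= k satisfied by exactly the
   (sigma u sigma')-structures satisfying one of these type-sentences. *)
Definition flip_disj (L : logic) (k : nat) (T : finType) (A : interp s T)
  (B : interp s' T) (psi : formula (vsum s s')) : Prop :=
  L_sentence L psi /\ qr psi <= k /\
  forall (T'' : finType) (M : interp (vsum s s') T''),
    holds M psi <->
    exists (T' : finType) (A' : interp s T') (B' : interp s' T'),
      D A' /\ C B' /\ kflip L k A B A' B' /\ sat_tp L k (pairI A' B') M.

End Inv.

(* Main.v *)
From mathcomp Require Import all_boot.
Require Import Defs.
From Stdlib Require Import Classical ClassicalEpsilon FunctionalExtensionality.
Set Implicit Arguments.
Unset Strict Implicit.
Unset Printing Implicit Defensive.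

Definition rnt (V : vocab) (p : nat -> nat) (t : term V) : term V :=
  match t with tvar i => tvar V (p i) | tconst c => tconst c end.

Fixpoint rn (V : vocab) (p : nat -> nat) (f : formula V) : formula V :=
  match f with
  | Ffalse => Ffalse
  | Feq t u => Feq (rnt p t) (rnt p u)
  | Frel r ts => Frel (map_tuple (rnt p) ts)
  | Fmem i t => Fmem i (rnt p t)
  | Fneg g => Fneg (rn p g)
  | Fand g h => Fand (rn p g) (rn p h)
  | For g h => For (rn p g) (rn p h)
  | Fex i g => Fex (p i) (rn p g)
  | Fall i g => Fall (p i) (rn p g)
  | FexS i g => FexS i (rn p g)
  | FallS i g => FallS i (rn p g)
  end.

Fixpoint rnS (V : vocab) (p : nat -> nat) (f : formula V) : formula V :=
  match f with
  | Ffalse => Ffalse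
  | Feq t u => Feq t u
  | Frel r ts => Frel ts
  | Fmem i t => Fmem (p i) t
  | Fneg g => Fneg (rnS p g)
  | Fand g h => Fand (rnS p g) (rnS p h)
  | For g h => For (rnS p g) (rnS p h)
  | Fex i g => Fex i (rnS p g)
  | Fall i g => Fall i (rnS p g)
  | FexS i g => FexS (p i) (rnS p g)
  | FallS i g => FallS (p i) (rnS p g)
  end.

Lemma tval_rnt V T (M : interp V T) e p t :
  tval M e (rnt p t) = tval M (e \o p) t.
Proof. by case: t. Qed.

Lemma sat_rn V T (M : interp V T) p (pinj : injective p) f :
  forall e s, sat M e s (rn p f) <-> sat M (e \o p) s f.
Proof.
elim: f => [|t u|r ts|i t|g IH|g IHg h IHh|g IHg h IHh|i g IH|i g IH|i g IH|i g IH] e s /=.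
- exact: iff_refl.
- by rewrite !tval_rnt.
- have E j : tnth (map_tuple (rnt p) ts) j = rnt p (tnth ts j) by rewrite tnth_map.
  split=> -[xs [H1 H2]]; exists xs; split=> // j; move: (H1 j);
    by rewrite E tval_rnt.
- by rewrite tval_rnt.
- by split=> H1 H2; apply: H1; apply/IH.
- by split=> -[H1 H2]; split; apply/IHg || apply/IHh.
- by split=> -[H1|H1]; [left; apply/IHg|right; apply/IHh|left; apply/IHg|right; apply/IHh].
- have E x : (fun j => if j == p i then Some x else e j) \o p =
             (fun j => if j == i then Some x else (e \o p) j).
    by apply: functional_extensionality => j /=; rewrite (inj_eq pinj).
  by split=> -[x Hx]; exists x; [rewrite -E; apply/IH | apply/IH; rewrite E].
- have E x : (fun j => if j == p i then Some x else e j) \o p =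
             (fun j => if j == i then Some x else (e \o p) j).
    by apply: functional_extensionality => j /=; rewrite (inj_eq pinj).
  by split=> Hx x; [rewrite -E; apply/IH | apply/IH; rewrite E].
- by split=> -[X HX]; exists X; apply/IH.
- by split=> HX X; apply/IH.
Qed.

Lemma sat_rnS V T (M : interp V T) p (pinj : injective p) f :
  forall e s, sat M e s (rnS p f) <-> sat M e (s \o p) f.
Proof.
elim: f => [|t u|r ts|i t|g IH|g IHg h IHh|g IHg h IHh|i g IH|i g IH|i g IH|i g IH] e s /=.
- exact: iff_refl.
- exact: iff_refl.
- exact: iff_refl.
- exact: iff_refl.
- by split=> H1 H2; apply: H1; apply/IH.
- by split=> -[H1 H2]; split; apply/IHg || apply/IHh.
- by split=> -[H1|H1]; [left; apply/IHg|right; apply/IHh|left; apply/IHg|right; apply/IHh].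
- by split=> -[x Hx]; exists x; apply/IH.
- by split=> Hx x; apply/IH.
- have E x : (fun j => if j == p i then x else s j) \o p =
             (fun j => if j == i then x else (s \o p) j).
    by apply: functional_extensionality => j /=; rewrite (inj_eq pinj).
  by split=> -[x Hx]; exists x; [rewrite -E; apply/IH | apply/IH; rewrite E].
- have E x : (fun j => if j == p i then x else s j) \o p =
             (fun j => if j == i then x else (s \o p) j).
    by apply: functional_extensionality => j /=; rewrite (inj_eq pinj).
  by split=> Hx x; [rewrite -E; apply/IH | apply/IH; rewrite E].
Qed.

Lemma tval_coinc V T (M : interp V T) e1 e2 t :
  (forall m, m \in tvars t -> e1 m = e2 m) -> tval M e1 t = tval M e2 t.
Proof. by case: t => [i|c] //= H; apply: H; rewrite inE. Qed.

Lemma tvars_nth V (l : seq (term V)) j d m :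
  j < size l -> m \in tvars (nth d l j) -> m \in flatten (map (@tvars V) l).
Proof.
elim: l j => [|t l IH] [|j] //= Hj Hm; rewrite mem_cat ?Hm //.
by rewrite (IH j) ?orbT.
Qed.

Lemma tvars_tnth V n (ts : n.-tuple (term V)) i m :
  m \in tvars (tnth ts i) -> m \in flatten (map (@tvars V) ts).
Proof.
rewrite (tnth_nth (tvar V 0)) => H; apply: (tvars_nth _ H).
by rewrite size_tuple.
Qed.

Lemma sat_coinc V T (M : interp V T) f : forall e1 e2 s1 s2,
  (forall m, m \in fv f -> e1 m = e2 m) ->
  (forall m, m \in fsv f -> s1 m = s2 m) ->
  (sat M e1 s1 f <-> sat M e2 s2 f).
Proof.
elim: f => [|t u|r ts|i t|g IH|g IHg h IHh|g IHg h IHh|i g IH|i g IH|i g IH|i g IH]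
  e1 e2 s1 s2 He Hs /=.
- exact: iff_refl.
- have E1 : tval M e1 t = tval M e2 t.
    by apply: tval_coinc => m Hm; apply: He; rewrite /= mem_cat Hm.
  have E2 : tval M e1 u = tval M e2 u.
    by apply: tval_coinc => m Hm; apply: He; rewrite /= mem_cat Hm orbT.
  by rewrite E1 E2.
- have E j : tval M e1 (tnth ts j) = tval M e2 (tnth ts j).
    by apply: tval_coinc => m Hm; apply: He; apply: tvars_tnth Hm.
  by split=> -[xs [H1 H2]]; exists xs; split=> // j; [rewrite -E | rewrite E]; exact: H1.
- have E1 : tval M e1 t = tval M e2 t by apply: tval_coinc => m Hm; apply: He.
  by rewrite E1 Hs ?inE.
- have := IH e1 e2 s1 s2 He Hs; tauto.
- have Hg : sat M e1 s1 g <-> sat M e2 s2 g.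
    by apply: IHg => m Hm; [apply: He|apply: Hs]; rewrite /= mem_cat Hm.
  have Hh : sat M e1 s1 h <-> sat M e2 s2 h.
    by apply: IHh => m Hm; [apply: He|apply: Hs]; rewrite /= mem_cat Hm orbT.
  tauto.
- have Hg : sat M e1 s1 g <-> sat M e2 s2 g.
    by apply: IHg => m Hm; [apply: He|apply: Hs]; rewrite /= mem_cat Hm.
  have Hh : sat M e1 s1 h <-> sat M e2 s2 h.
    by apply: IHh => m Hm; [apply: He|apply: Hs]; rewrite /= mem_cat Hm orbT.
  tauto.
- have H x : sat M (fun j => if j == i then Some x else e1 j) s1 g <->
             sat M (fun j => if j == i then Some x else e2 j) s2 g.
    apply: IH => // m Hm; case: eqP => // /eqP ne; apply: He.
    by rewrite /= mem_filter ne.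
  by split=> -[x Hx]; exists x; apply/H.
- have H x : sat M (fun j => if j == i then Some x else e1 j) s1 g <->
             sat M (fun j => if j == i then Some x else e2 j) s2 g.
    apply: IH => // m Hm; case: eqP => // /eqP ne; apply: He.
    by rewrite /= mem_filter ne.
  by split=> Hx x; apply/H.
- have H X : sat M e1 (fun j => if j == i then X else s1 j) g <->
             sat M e2 (fun j => if j == i then X else s2 j) g.
    apply: IH => // m Hm; case: eqP => // /eqP ne; apply: Hs.
    by rewrite /= mem_filter ne.
  by split=> -[x Hx]; exists x; apply/H.
- have H X : sat M e1 (fun j => if j == i then X else s1 j) g <->
             sat M e2 (fun j => if j == i then X else s2 j) g.
    apply: IH => // m Hm; case: eqP => // /eqP ne; apply: Hs.
    by rewrite /= mem_filter ne.
  by split=> Hx x; apply/H.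
Qed.

Lemma tvars_rnt V p (t : term V) : tvars (rnt p t) = map p (tvars t).
Proof. by case: t. Qed.

Lemma flat_rnt V p (l : seq (term V)) :
  flatten (map (@tvars V) (map (rnt p) l)) = map p (flatten (map (@tvars V) l)).
Proof. by elim: l => //= t l ->; rewrite map_cat tvars_rnt. Qed.

Lemma fv_rn V p (pinj : injective p) (f : formula V) :
  fv (rn p f) = map p (fv f).
Proof.
elim: f => [|t u|r ts|i t|g IH|g IHg h IHh|g IHg h IHh|i g IH|i g IH|i g IH|i g IH] //=; rewrite ?IH ?IHg ?IHh //;
  rewrite ?map_cat ?tvars_rnt //.
- exact: flat_rnt.
- rewrite filter_map; congr map; apply: eq_filter => j /=; by rewrite (inj_eq pinj).
- rewrite filter_map; congr map; apply: eq_filter => j /=; by rewrite (inj_eq pinj).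
Qed.

Lemma fsv_rn V p (f : formula V) : fsv (rn p f) = fsv f.
Proof. by elim: f => [|t u|r ts|i t|g IH|g IHg h IHh|g IHg h IHh|i g IH|i g IH|i g IH|i g IH] //=; rewrite ?IH ?IHg ?IHh. Qed.

Lemma qr_rn V p (f : formula V) : qr (rn p f) = qr f.
Proof. by elim: f => [|t u|r ts|i t|g IH|g IHg h IHh|g IHg h IHh|i g IH|i g IH|i g IH|i g IH] //=; rewrite ?IH ?IHg ?IHh. Qed.

Lemma FO_rn V p (f : formula V) : is_FO (rn p f) = is_FO f.
Proof. by elim: f => [|t u|r ts|i t|g IH|g IHg h IHh|g IHg h IHh|i g IH|i g IH|i g IH|i g IH] //=; rewrite ?IH ?IHg ?IHh. Qed.

Lemma fv_rnS V p (f : formula V) : fv (rnS p f) = fv f.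
Proof. by elim: f => [|t u|r ts|i t|g IH|g IHg h IHh|g IHg h IHh|i g IH|i g IH|i g IH|i g IH] //=; rewrite ?IH ?IHg ?IHh. Qed.

Lemma fsv_rnS V p (pinj : injective p) (f : formula V) :
  fsv (rnS p f) = map p (fsv f).
Proof.
elim: f => [|t u|r ts|i t|g IH|g IHg h IHh|g IHg h IHh|i g IH|i g IH|i g IH|i g IH] //=; rewrite ?IH ?IHg ?IHh //;
  rewrite ?map_cat //.
- rewrite filter_map; congr map; apply: eq_filter => j /=; by rewrite (inj_eq pinj).
- rewrite filter_map; congr map; apply: eq_filter => j /=; by rewrite (inj_eq pinj).
Qed.

Lemma qr_rnS V p (f : formula V) : qr (rnS p f) = qr f.
Proof. by elim: f => [|t u|r ts|i t|g IH|g IHg h IHh|g IHg h IHh|i g IH|i g IH|i g IH|i g IH] //=; rewrite ?IH ?IHg ?IHh. Qed.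

Lemma FO_rnS V p (f : formula V) : is_FO (rnS p f) = is_FO f.
Proof. by elim: f => [|t u|r ts|i t|g IH|g IHg h IHh|g IHg h IHh|i g IH|i g IH|i g IH|i g IH] //=; rewrite ?IH ?IHg ?IHh. Qed.

Definition swap (i j m : nat) := if m == i then j else if m == j then i else m.

Lemma swapK i j : involutive (swap i j).
Proof.
move=> m; rewrite /swap.
case: (eqVneq m i) => [->|Hi]; first by rewrite eqxx; case: eqVneq.
case: (eqVneq m j) => [->|Hj]; first by rewrite eqxx.
by rewrite (negbTE Hi) (negbTE Hj).
Qed.

Lemma swap_inj i j : injective (swap i j).
Proof. exact: (can_inj (swapK i j)). Qed.

Definition nX (X : seq nat) := foldr maxn 0 X.

Lemma nX_ge X i : i \in X -> i <= nX X.
Proof.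
elim: X => //= a X IH; rewrite in_cons => /orP [/eqP ->|H].
- exact: leq_maxl.
- exact: leq_trans (IH H) (leq_maxr _ _).
Qed.

Lemma fresh_notin X : (nX X).+1 \notin X.
Proof. by apply/negP => /nX_ge; rewrite ltnn. Qed.

Definition goodb (L : logic) (k : nat) (X Y : seq nat) V (f : formula V) : bool :=
  [&& in_logic L f, qr f <= k, all (fun m => m \in X) (fv f)
    & all (fun m => m \in Y) (fsv f)].

Definition feq V (f g : formula V) := forall (T : finType) (M : interp V T) e s,
  sat M e s f <-> sat M e s g.

Lemma rn_fresh V (f : formula V) (X : seq nat) i j0 T (M : interp V T) e s :
  j0 \notin X -> all (fun m => m \in X) (fv f) -> i \notin fv f ->
  (sat M e s (rn (swap i j0) f) <-> sat M e s f).
Proof.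
move=> Hj Hf Hi; rewrite sat_rn; last exact: swap_inj.
apply: sat_coinc => // m Hm /=; rewrite /swap.
have mi : m != i by apply: contraNneq Hi => <-.
have mj : m != j0 by apply: contraNneq Hj => <-; exact: (allP Hf).
by rewrite (negbTE mi) (negbTE mj).
Qed.

Lemma rnS_fresh V (f : formula V) (Y : seq nat) i j0 T (M : interp V T) e s :
  j0 \notin Y -> all (fun m => m \in Y) (fsv f) -> i \notin fsv f ->
  (sat M e s (rnS (swap i j0) f) <-> sat M e s f).
Proof.
move=> Hj Hf Hi; rewrite sat_rnS; last exact: swap_inj.
apply: sat_coinc => // m Hm /=; rewrite /swap.
have mi : m != i by apply: contraNneq Hi => <-.
have mj : m != j0 by apply: contraNneq Hj => <-; exact: (allP Hf).
by rewrite (negbTE mi) (negbTE mj).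
Qed.

Definition pb (P : Prop) : bool :=
  if excluded_middle_informative P then true else false.

Lemma pbP (P : Prop) : reflect P (pb P).
Proof. by rewrite /pb; case: excluded_middle_informative => H; constructor. Qed.

Fixpoint ors V (l : seq (formula V)) : formula V :=
  match l with [::] => Ffalse | f :: l => For f (ors l) end.
Fixpoint ands V (l : seq (formula V)) : formula V :=
  match l with [::] => Fneg Ffalse | f :: l => Fand f (ands l) end.

Definition lit V (I : finType) (B : I -> formula V) i (b : bool) :=
  if b then B i else Fneg (B i).
Definition conjv V (I : finType) (B : I -> formula V) (v : {ffun I -> bool}) :=
  ands [seq lit B i (v i) | i <- enum I].
Definition dnf V (I : finType) (B : I -> formula V) (P : {set {ffun I -> bool}}) :=
  ors [seq conjv B v | v <- enum P].

Definition vecs V (I : finType) (B : I -> formula V) T (M : interp V T) e s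
  : {ffun I -> bool} := [ffun i => pb (sat M e s (B i))].


Lemma sat_lit V (I : finType) (B : I -> formula V) T (M : interp V T) e s i b :
  sat M e s (lit B i b) <-> vecs B M e s i = b.
Proof.
rewrite /lit ffunE; case: b; case: pbP => H /=; split=> //; tauto.
Qed.

Lemma sat_ands_lit V (I : finType) (B : I -> formula V) T (M : interp V T) e s
  v (r : seq I) :
  sat M e s (ands [seq lit B i (v i) | i <- r]) <->
  (forall i, i \in r -> vecs B M e s i = v i).
Proof.
elim: r => [|i r IH] /=.
- by split; [move=> _ j; rewrite in_nil | move=> _ []].
- split.
  + move=> [H1 H2] j; rewrite in_cons => /orP [/eqP ->|Hj].
    * exact/sat_lit.
    * exact: (proj1 IH H2 j Hj).
  + move=> H; split.
    * by apply/sat_lit; apply: H; rewrite mem_head.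
    * by apply/IH => j Hj; apply: H; rewrite in_cons Hj orbT.
Qed.

Lemma sat_conjv V (I : finType) (B : I -> formula V) T (M : interp V T) e s v :
  sat M e s (conjv B v) <-> vecs B M e s = v.
Proof.
rewrite /conjv sat_ands_lit; split.
- by move=> H; apply/ffunP => i; apply: H; rewrite mem_enum.
- by move=> -> i.
Qed.

Lemma sat_dnf V (I : finType) (B : I -> formula V) T (M : interp V T) e s P :
  sat M e s (dnf B P) <-> vecs B M e s \in P.
Proof.
rewrite /dnf -mem_enum; elim: (enum P) => [|v r IH] /=.
- by rewrite in_nil.
- rewrite in_cons sat_conjv; split.
  + by move=> [->|/IH ->]; rewrite ?eqxx ?orbT.
  + by move=> /orP [/eqP ->|/IH]; [left|right].
Qed.

Lemma inl_and L V (g h : formula V) :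
  in_logic L (Fand g h) = in_logic L g && in_logic L h.
Proof. by case: L. Qed.
Lemma inl_or L V (g h : formula V) :
  in_logic L (For g h) = in_logic L g && in_logic L h.
Proof. by case: L. Qed.
Lemma inl_neg L V (g : formula V) : in_logic L (Fneg g) = in_logic L g.
Proof. by case: L. Qed.

Lemma good_false L k X Y V : goodb L k X Y (@Ffalse V).
Proof. by case: L. Qed.

Lemma good_neg L k X Y V (g : formula V) : goodb L k X Y (Fneg g) = goodb L k X Y g.
Proof. by rewrite /goodb inl_neg. Qed.

Lemma good_and L k X Y V (g h : formula V) :
  goodb L k X Y (Fand g h) = goodb L k X Y g && goodb L k X Y h.
Proof.
rewrite /goodb inl_and /= geq_max !all_cat.
by case: (in_logic L g); case: (in_logic L h); case: (qr g <= k); case: (qr h <= k);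
  case: (all _ (fv g)); case: (all _ (fv h)); case: (all _ (fsv g)); case: (all _ (fsv h)).
Qed.

Lemma good_or L k X Y V (g h : formula V) :
  goodb L k X Y (For g h) = goodb L k X Y g && goodb L k X Y h.
Proof.
rewrite /goodb inl_or /= geq_max !all_cat.
by case: (in_logic L g); case: (in_logic L h); case: (qr g <= k); case: (qr h <= k);
  case: (all _ (fv g)); case: (all _ (fv h)); case: (all _ (fsv g)); case: (all _ (fsv h)).
Qed.

Lemma good_dnf L k X Y V (I : finType) (B : I -> formula V) P :
  (forall i, goodb L k X Y (B i)) -> goodb L k X Y (dnf B P).
Proof.
move=> HB; rewrite /dnf; elim: (enum P) => [|v r IH] /=; first exact: good_false.
rewrite good_or IH andbT /conjv; elim: (enum I) => [|i l IHl] /=.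
- by rewrite good_neg good_false.
- by rewrite good_and IHl andbT /lit; case: (v i); rewrite ?good_neg HB.
Qed.

Definition Tm (V : vocab) (X : seq nat) : finType := ('I_(nX X).+1 + csym V)%type.

Definition toT V X (t : Tm V X) : term V :=
  match t with inl o => tvar V o | inr c => tconst c end.
Definition ofT V X (t : term V) : Tm V X :=
  match t with tvar i => inl (inord i) | tconst c => inr c end.

Lemma toT_ofT V X (t : term V) : all (fun m => m \in X) (tvars t) ->
  toT (@ofT V X t) = t.
Proof.
case: t => [i|c] //=; rewrite andbT => /nX_ge H.
by rewrite inordK.
Qed.

Definition AI (V : vocab) (X Y : seq nat) : finType :=
  (Tm V X * Tm V X + {r : rsym V & (arity r).-tuple (Tm V X)}
   + 'I_(nX Y).+1 * Tm V X)%type.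

Definition atom V X Y (a : AI V X Y) : formula V :=
  match a with
  | inl (inl (t, u)) => Feq (toT t) (toT u)
  | inl (inr (existT r ts)) => Frel (map_tuple (@toT V X) ts)
  | inr (o, t) => Fmem o (toT t)
  end.

Definition isq V (f : formula V) : bool :=
  match f with Fex _ _ | Fall _ _ | FexS _ _ | FallS _ _ => true | _ => false end.

Definition Fin L V k (X Y : seq nat) :=
  exists (I : finType) (Phi : I -> formula V),
    (forall i, goodb L k X Y (Phi i)) /\
    (forall f, goodb L k X Y f -> exists i, feq f (Phi i)).

Lemma feq_refl V (f : formula V) : feq f f.
Proof. by move=> T M e s. Qed.

Lemma closure L V k (X Y : seq nat) (I : finType) (Bq : I -> formula V) :
  (forall f, goodb L k X Y f -> isq f ->
     exists i, goodb L k X Y (Bq i) /\ feq f (Bq i)) ->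
  Fin L V k X Y.
Proof.
move=> HQ.
pose B (j : (AI V X Y + I)%type) :=
  let g := match j with inl a => atom a | inr i => Bq i end in
  if goodb L k X Y g then g else Ffalse.
have HB j : goodb L k X Y (B j).
  rewrite /B; case: ifP => // _; exact: good_false.
have one j f : feq f (B j) -> exists P : {set {ffun (AI V X Y + I)%type -> bool}},
    forall T (M : interp V T) e s, sat M e s f <-> vecs B M e s \in P.
  move=> Hf; exists [set v : {ffun (AI V X Y + I)%type -> bool} | v j] => T M e s; rewrite inE ffunE Hf.
  by split => [/pbP|/pbP].
have det f : goodb L k X Y f -> exists P : {set {ffun (AI V X Y + I)%type -> bool}},
    forall T (M : interp V T) e s, sat M e s f <-> vecs B M e s \in P.
  elim: f => [|t u|r ts|i t|g IH|g IHg h IHh|g IHg h IHh|i g IH|i g IH|i g IH|i g IH] Hg.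
  - by exists set0 => T M e s; rewrite in_set0.
  - apply: (one (inl (inl (inl (ofT X t, ofT X u))))).
    have [Ht Hu] : all (fun m => m \in X) (tvars t) /\ all (fun m => m \in X) (tvars u).
      by move: (Hg); rewrite /goodb => /and4P [_ _ H _]; move: H; rewrite /= all_cat => /andP [-> ->].
    rewrite /B /= !toT_ofT // Hg; exact: feq_refl.
  - apply: (one (inl (inl (inr (existT _ r (map_tuple (@ofT V X) ts)))))).
    have E : map_tuple (@toT V X) (map_tuple (@ofT V X) ts) = ts.
      apply: eq_from_tnth => j; rewrite !tnth_map toT_ofT //.
      move: Hg; rewrite /goodb => /and4P [_ _ /allP H _].
      by apply/allP => m Hm; apply: H; apply: tvars_tnth Hm.
    rewrite /B /= E Hg; exact: feq_refl.
  - have Hi : i < (nX Y).+1.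
      move: Hg; rewrite /goodb => /and4P [_ _ _]; rewrite /= andbT => /nX_ge.
      by [].
    apply: (one (inl (inr (inord i, ofT X t)))).
    rewrite /B /= inordK // toT_ofT ?Hg; first exact: feq_refl.
    by move: Hg; rewrite /goodb => /and4P [].
  - rewrite good_neg in Hg; have [P HP] := IH Hg.
    exists (~: P) => T M e s; rewrite in_setC /= HP.
    by split => [/negP|/negP].
  - rewrite good_and in Hg; case/andP: Hg => Hg Hh.
    have [P HP] := IHg Hg; have [Q HQ'] := IHh Hh.
    exists (P :&: Q) => T M e s; rewrite in_setI /= HP HQ'.
    by split => [[-> ->]|/andP].
  - rewrite good_or in Hg; case/andP: Hg => Hg Hh.
    have [P HP] := IHg Hg; have [Q HQ'] := IHh Hh.
    exists (P :|: Q) => T M e s; rewrite in_setU /= HP HQ'.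
    by split => [[->|->]|/orP]; rewrite ?orbT.
  1-4: have [j [Hj Hf]] := HQ _ Hg erefl.
  1-4: by apply: (one (inr j)); rewrite /B /= Hj.
exists {set {ffun (AI V X Y + I)%type -> bool}}, (dnf B); split.
- by move=> P; apply: good_dnf.
- move=> f Hf; have [P HP] := det f Hf; exists P => T M e s.
  by rewrite sat_dnf HP.
Qed.

Lemma goodFex_inv L k (X Y : seq nat) V i (g : formula V) j0 :
  j0 \notin X -> goodb L k.+1 X Y (Fex i g) -> goodb L k (j0 :: X) Y (rn (swap i j0) g).
Proof.
move=> Hj /and4P [Hl Hq Hfv Hfsv]; apply/and4P; split.
- by case: L Hl => //=; rewrite FO_rn.
- by rewrite qr_rn.
- rewrite fv_rn; last exact: swap_inj.
  apply/allP => m /mapP [m' Hm' ->]; rewrite /swap.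
  case: eqP => [_|/eqP ne]; first by rewrite mem_head.
  have HX : m' \in X by apply: (allP Hfv); rewrite /= mem_filter ne.
  have nj : m' != j0 by apply: contraNneq Hj => <-.
  by rewrite (negbTE nj) in_cons HX orbT.
- by rewrite fsv_rn.
Qed.

Lemma goodFex_intro L k (X Y : seq nat) V j0 (g : formula V) :
  goodb L k (j0 :: X) Y g -> goodb L k.+1 X Y (Fex j0 g).
Proof.
move/and4P => [Hl Hq Hfv Hfsv]; apply/and4P; split.
- by case: L Hl.
- by [].
- apply/allP => m; rewrite /= mem_filter => /andP [ne Hm].
  by move: (allP Hfv m Hm); rewrite in_cons (negbTE ne).
- by [].
Qed.

Lemma good_all_ex L k (X Y : seq nat) V i (g : formula V) :
  goodb L k X Y (Fall i g) = goodb L k X Y (Fex i g).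
Proof. by case: L. Qed.

Lemma goodFexS_inv L k (X Y : seq nat) V i (g : formula V) j0 :
  j0 \notin Y -> goodb L k.+1 X Y (FexS i g) -> goodb L k X (j0 :: Y) (rnS (swap i j0) g).
Proof.
move=> Hj /and4P [Hl Hq Hfv Hfsv]; apply/and4P; split.
- by case: L Hl => //=; rewrite FO_rnS.
- by rewrite qr_rnS.
- by rewrite fv_rnS.
- rewrite fsv_rnS; last exact: swap_inj.
  apply/allP => m /mapP [m' Hm' ->]; rewrite /swap.
  case: eqP => [_|/eqP ne]; first by rewrite mem_head.
  have HX : m' \in Y by apply: (allP Hfsv); rewrite /= mem_filter ne.
  have nj : m' != j0 by apply: contraNneq Hj => <-.
  by rewrite (negbTE nj) in_cons HX orbT.
Qed.

Lemma goodFexS_intro L k (X Y : seq nat) V i (g0 : formula V) j0 (g : formula V) :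
  in_logic L (FexS i g0) ->
  goodb L k X (j0 :: Y) g -> goodb L k.+1 X Y (FexS j0 g).
Proof.
move=> H0 /and4P [Hl Hq Hfv Hfsv]; apply/and4P; split.
- by case: L H0 Hl.
- by [].
- by [].
- apply/allP => m; rewrite /= mem_filter => /andP [ne Hm].
  by move: (allP Hfsv m Hm); rewrite in_cons (negbTE ne).
Qed.

Lemma good_allS_exS L k (X Y : seq nat) V i (g : formula V) :
  goodb L k X Y (FallS i g) = goodb L k X Y (FexS i g).
Proof. by case: L. Qed.

Lemma swap_eq i j : swap i j i = j.
Proof. by rewrite /swap eqxx. Qed.

Lemma fin L V k : forall (X Y : seq nat), Fin L V k X Y.
Proof.
elim: k => [|k IH] X Y.
- apply: (@closure L V 0 X Y void (fun _ => Ffalse)) => f.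
  by case: f => // i g /and4P [_ H _ _].
set j0 := (nX X).+1; set j1 := (nX Y).+1.
have [I1 [P1 [G1 C1]]] := IH (j0 :: X) Y.
have [I2 [P2 [G2 C2]]] := IH X (j1 :: Y).
apply: (@closure L V k.+1 X Y (I1 + I1 + (I2 + I2))%type
  (fun q => match q with
            | inl (inl i) => Fex j0 (P1 i) | inl (inr i) => Fall j0 (P1 i)
            | inr (inl i) => FexS j1 (P2 i) | inr (inr i) => FallS j1 (P2 i) end)).
have nX0 : j0 \notin X by apply: fresh_notin.
have nY0 : j1 \notin Y by apply: fresh_notin.
move=> f; case: f => // i g Hf _.
- have [i1 Hi1] := C1 _ (goodFex_inv nX0 Hf).
  exists (inl (inl i1)); split; first exact: goodFex_intro.
  move=> T M e s.
  have Hfv : all (fun m => m \in X) (fv (Fex i g)) by case/and4P: Hf.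
  have Hi : i \notin fv (Fex i g) by rewrite /= mem_filter eqxx.
  rewrite -(rn_fresh M e s nX0 Hfv Hi) /= swap_eq.
  by split=> -[x Hx]; exists x; apply/Hi1.
- rewrite good_all_ex in Hf.
  have [i1 Hi1] := C1 _ (goodFex_inv nX0 Hf).
  exists (inl (inr i1)); split; first by rewrite good_all_ex; exact: goodFex_intro.
  move=> T M e s.
  have Hfv : all (fun m => m \in X) (fv (Fall i g)) by case/and4P: Hf.
  have Hi : i \notin fv (Fall i g) by rewrite /= mem_filter eqxx.
  rewrite -(rn_fresh M e s nX0 Hfv Hi) /= swap_eq.
  by split=> Hx x; apply/Hi1.
- have [i1 Hi1] := C2 _ (goodFexS_inv nY0 Hf).
  have Hl : in_logic L (FexS i g) by case/and4P: Hf.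
  exists (inr (inl i1)); split; first exact: goodFexS_intro Hl _.
  move=> T M e s.
  have Hfv : all (fun m => m \in Y) (fsv (FexS i g)) by case/and4P: Hf.
  have Hi : i \notin fsv (FexS i g) by rewrite /= mem_filter eqxx.
  rewrite -(rnS_fresh M e s nY0 Hfv Hi) /= swap_eq.
  by split=> -[x Hx]; exists x; apply/Hi1.
- rewrite good_allS_exS in Hf.
  have [i1 Hi1] := C2 _ (goodFexS_inv nY0 Hf).
  have Hl : in_logic L (FexS i g) by case/and4P: Hf.
  exists (inr (inr i1)); split.
    by rewrite good_allS_exS; exact: goodFexS_intro Hl _.
  move=> T M e s.
  have Hfv : all (fun m => m \in Y) (fsv (FallS i g)) by case/and4P: Hf.
  have Hi : i \notin fsv (FallS i g) by rewrite /= mem_filter eqxx.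
  rewrite -(rnS_fresh M e s nY0 Hfv Hi) /= swap_eq.
  by split=> Hx x; apply/Hi1.
Qed.

Lemma all_nil (l : seq nat) : all (fun m => m \in [::]) l = (l == [::]).
Proof. by case: l. Qed.

Lemma good0 L k V (f : formula V) :
  goodb L k [::] [::] f <-> (L_sentence L f /\ qr f <= k).
Proof.
rewrite /goodb !all_nil /L_sentence /is_sentence; split.
- by case/and4P => -> -> /eqP -> /eqP ->.
- by move=> [[-> [-> ->]] ->].
Qed.

Lemma satp_same L k V T1 T2 (N : interp V T1) (M : interp V T2) :
  sat_tp L k N M -> same_tp L k N M.
Proof.
move=> H f; split.
- move=> Hf; case: (Hf) => Ls [Hq Hh]; do !split => //; exact: H.
- move=> [Ls [Hq Hh]]; split; [|split] => //.
  apply: NNPP => Hn.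
  have : in_tp L k N (Fneg f).
    case: Ls => Hl [Hfv Hfsv].
    by do !split => //; case: L Hl.
  by move/H.
Qed.

Lemma vec_sat_tp L k V (I : finType) (Phi : I -> formula V) :
  (forall i, goodb L k [::] [::] (Phi i)) ->
  (forall f, goodb L k [::] [::] f -> exists i, feq f (Phi i)) ->
  forall T1 T2 (N : interp V T1) (M : interp V T2),
    vecs Phi N (fun _ => None) (fun _ => set0) = vecs Phi M (fun _ => None) (fun _ => set0)
    <-> sat_tp L k N M.
Proof.
move=> HG HC T1 T2 N M; split.
- move=> Hv f [Ls [Hq Hh]].
  have [i Hi] := HC f (proj2 (good0 L k f) (conj Ls Hq)).
  have : vecs Phi N (fun _ => None) (fun _ => set0) i = true.
    by rewrite ffunE; apply/pbP; apply/Hi.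
  rewrite Hv ffunE => /pbP H; exact/Hi.
- move=> H; apply/ffunP => i; rewrite !ffunE.
  have [Ls Hq] := proj1 (good0 L k (Phi i)) (HG i).
  case: (pbP (sat N _ _ (Phi i))) => HN.
  + by apply/esym/pbP; apply: H.
  + apply/esym/pbP => HM.
    have : in_tp L k N (Fneg (Phi i)).
      case: Ls => Hl [Hfv Hfsv].
      by do !split => //; case: L Hl {HG HC H} HN HM.
    by move/H.
Qed.

Lemma tpinv_step (s s' : vocab) (D : sclass s) (C : sclass s') L k p q :
  ksim D C L k p q -> forall f,
  in_tpinv D C L k (pfst p) f <-> in_tpinv D C L k (pfst q) f.
Proof.
have dir : forall p q : spair s s', D _ (pfst p) -> C _ (psnd p) -> D _ (pfst q) -> C _ (psnd q) ->
   same_tp L k (pairI (pfst p) (psnd p)) (pairI (pfst q) (psnd q)) ->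
   forall f, in_tpinv D C L k (pfst p) f -> in_tpinv D C L k (pfst q) f.
  move=> p0 q0 Dp Cp Dq Cq Hs f [Ls [Hq [Hinv [_ [B0 [CB0 H0]]]]]].
  split => //; split => //; split => //; split => //.
  exists (psnd q0); split => //.
  have Hp : in_tp L k (pairI (pfst p0) (psnd p0)) f.
    by do !split => //; apply: (proj1 (Hinv _ _ Dp B0 (psnd p0) CB0 Cp)).
  by case: (proj1 (Hs f) Hp) => _ [_ ?].
case=> Dp [Cp [Dq [Cq [Heq|Hs]]]] f.
- pose Q (x : {T : finType & interp s T}) := in_tpinv D C L k (projT2 x) f.
  have : Q (existT _ (pdom p) (pfst p)) <-> Q (existT _ (pdom q) (pfst q)).
    by rewrite Heq.
  by [].
- split; first exact: dir.
  apply: dir => // g; exact: iff_sym.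
Qed.

Lemma tpinv_flip (s s' : vocab) (D : sclass s) (C : sclass s') L k p r :
  kflip_of D C L k p r -> forall f,
  in_tpinv D C L k (pfst p) f <-> in_tpinv D C L k (pfst r) f.
Proof.
elim => [|q r' _ IH Hs] f; first exact: iff_refl.
split => H.
- by apply/(tpinv_step Hs)/IH.
- by apply/IH/(tpinv_step Hs).
Qed.

Theorem proposition3p2 (L : logic) (k : nat) (s s' : vocab)
  (C : sclass s') (D : sclass s)
  (T : finType) (A : interp s T) (B : interp s' T) (HA : D T A) (HB : C T B) :
  (exists psi, flip_disj D C L k A B psi) /\
  forall psi : formula (vsum s s'), flip_disj D C L k A B psi ->
    (* (1) *)
    (forall (T' : finType) (A' : interp s T') (B' : interp s' T'),
        D T' A' -> C T' B' ->
        (holds (pairI A' B') psi <-> kflip D C L k A B A' B')) /\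
    (* (2) *)
    (L_sentence L psi /\ qr psi <= k /\ C_invariant D C psi) /\
    (* (3) *)
    (forall (T' : finType) (A' : interp s T'), D T' A' ->
        (same_tpinv D C L k A A' <-> inQ D C psi A')).
Proof.
split.
- have [I [Phi [HG HC]]] := fin L (vsum s s') k [::] [::].
  pose vh T0 (M : interp (vsum s s') T0) := vecs Phi M (fun _ => None) (fun _ => set0).
  pose P := [set v : {ffun I -> bool} | pb (exists (T' : finType) (A' : interp s T')
     (B' : interp s' T'), D T' A' /\ C T' B' /\ kflip D C L k A B A' B' /\
     vh _ (pairI A' B') = v)].
  exists (dnf Phi P).
  have Hg : goodb L k [::] [::] (dnf Phi P) by apply: good_dnf.
  have [Ls Hq] := proj1 (good0 L k _) Hg.
  split => //; split => // T'' M.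
  rewrite /holds sat_dnf inE; split.
  + move/pbP => [T' [A' [B' [DA [CB [Hk Hv]]]]]].
    exists T', A', B'; do !split => //.
    by apply/(vec_sat_tp HG HC).
  + move=> [T' [A' [B' [DA [CB [Hk Hv]]]]]].
    apply/pbP; exists T', A', B'; do !split => //.
    by apply/(vec_sat_tp HG HC).
- move=> psi [Ls [Hq Hpsi]].
  have H1 : forall (T' : finType) (A' : interp s T') (B' : interp s' T'),
        D T' A' -> C T' B' ->
        (holds (pairI A' B') psi <-> kflip D C L k A B A' B').
    move=> T' A' B' DA CB; split.
    + move/Hpsi => [T2 [A2 [B2 [D2 [C2 [Hk Hsat]]]]]].
      apply: (kflip_step Hk).
      by do 4!split => //; right; apply: satp_same.
    + move=> Hk; apply/Hpsi; exists T', A', B'; do 3!split => //.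
      by move=> f [_ [_ ?]].
  split => //; split.
  + split => //; split => // T0 A0 DA0 B1 B2 CB1 CB2.
    have Hs : ksim D C L k (SPair A0 B1) (SPair A0 B2).
      by do 4!split => //; left.
    have Hs' : ksim D C L k (SPair A0 B2) (SPair A0 B1).
      by do 4!split => //; left.
    rewrite !H1 //; split => H.
    * exact: (kflip_step H Hs).
    * exact: (kflip_step H Hs').
  + move=> T' A' DA'; split.
    * move=> Hs.
      have Hin : in_tpinv D C L k A psi.
        do 3!split => //.
        - move=> T0 A0 DA0 B1 B2 CB1 CB2.
          rewrite !H1 //; split => H.
          + by apply: (kflip_step H); do 4!split => //; left.
          + by apply: (kflip_step H); do 4!split => //; left.
        - split => //; exists B; split => //; apply/H1 => //; exact: kflip_refl.
      by case: (proj1 (Hs psi) Hin) => _ [_ [_ ?]].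
    * move=> [_ [B' [CB' Hh]]].
      have Hk := proj1 (H1 _ A' B' DA' CB') Hh.
      move=> f; exact: (tpinv_flip Hk f).
Qed.
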